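(* Let $H$ be a canonical 2-edge-cover of a graph $G=(V,E)$ such that $H$ has $b|H|$ bridges and exactly $t|H|$ edges of $H$ belong to 2EC components of $H$ which are triangles. Assign credits as follows: each 2EC component $C$ of $H$ gets $2$ credits if it has at least 7 edges, $1$ credit if it is a triangle, and $\frac{3}{10}k$ credits if it is a $k$-cycle with $4\le k\le 6$; each connected component of $H$ that is not 2EC gets $1$ credit; each bridge of $H$ gets $\frac14$ credit; each block of $H$ gets $1$ credit. Let $cr(H)$ be the total credits and $cost(H)=|H|+cr(H)$. Then $cost(H)\le\left(\frac{13}{10}+\frac1{30}t-\frac1{20}b\right)|H|$.
   Context: A 2-edge-cover of $G=(V,E)$ is $H\subseteq E$ with every node incident to at least two edges of $H$. A graph is 2EC if connected and it stays connected after removal of any one edge; 2EC components of $H$ are components of $(V,H)$ that are 2EC. In a non-2EC component $C$ of $H$, a bridge is an edge whose removal disconnects $C$; a block is a maximal 2EC subgraph of $C$ with at least 2 nodes; a leaf block is a block incident to exactly one bridge of $C$, an inner block otherwise. $H$ is canonical if: (i) every 2EC component of $H$ is an $i$-cycle ($3\le i\le6$) or has at least 7 edges; (ii) leaf blocks have at least 6 edges and inner blocks at least 4 edges; (iii) no 2-edge-cover of the same size with fewer connected components can be obtained from $H$ by adding up to 3 edges and removing the same number of edges. *)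

(* Defs.v *)
(* A graph G = (V,E) is a finite vertex type T (V = all of T)
   and an edge set E : {set {set T}} of 2-element vertex sets (simple graph). *)
From HB Require Import structures.
From mathcomp Require Import all_boot all_order all_algebra.
Set Implicit Arguments. Unset Strict Implicit. Unset Printing Implicit Defensive.
Import Order.TTheory GRing.Theory Num.Theory.

Section Defs.
Variable T : finType.
Implicit Types (F H E : {set {set T}}) (S C : {set T}).

Definition simple_edges E : bool := [forall e in E, #|e| == 2].

Definition adj F : rel T := fun u v => [set u; v] \in F.
Definition conn F (x y : T) : bool := connect (adj F) x y.

Definition connectedb S F : bool :=
  [forall x in S, forall y in S, conn F x y].

Definition twoECb S F : bool :=
  connectedb S F && [forall e in F, connectedb S (F :\ e)].

Definition deg F (v : T) : nat := #|[set e in F | v \in e]|.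

Definition two_edge_cover E H : bool :=
  (H \subset E) && [forall v : T, 2 <= deg H v].

Definition comp_of H (x : T) : {set T} := [set y | conn H x y].
Definition comps H : {set {set T}} := [set comp_of H x | x : T].

Definition compE H C : {set {set T}} := [set e in H | e \subset C].

Definition twoEC_comp H C : bool := (C \in comps H) && twoECb C (compE H C).
Definition non2EC_comp H C : bool := (C \in comps H) && ~~ twoECb C (compE H C).

Definition is_cycleb S F : bool :=
  connectedb S F && [forall v in S, deg F v == 2].

Definition bridges_of H C : {set {set T}} :=
  [set e in compE H C | ~~ connectedb C (compE H C :\ e)].

Definition subgraph_of H C (p : {set T} * {set {set T}}) : bool :=
  [&& p.1 \subset C, p.2 \subset compE H C & [forall e in p.2, e \subset p.1]].

Definition is_block H C (p : {set T} * {set {set T}}) : bool :=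
  [&& subgraph_of H C p, twoECb p.1 p.2, 2 <= #|p.1| &
      [forall q : {set T} * {set {set T}},
         [&& subgraph_of H C q, twoECb q.1 q.2, p.1 \subset q.1 & p.2 \subset q.2]
         ==> (q == p)]].

Definition blocks_of H C : {set {set T} * {set {set T}}} := [set p | is_block H C p].

Definition nb_incident_bridges H C (p : {set T} * {set {set T}}) : nat :=
  #|[set e in bridges_of H C | [exists v in e, v \in p.1]]|.

Definition leaf_block H C p : bool := is_block H C p && (nb_incident_bridges H C p == 1).
Definition inner_block H C p : bool := is_block H C p && (nb_incident_bridges H C p != 1).

Definition canonical E H : Prop :=
  [/\
      (forall C, twoEC_comp H C ->
          (is_cycleb C (compE H C) && (3 <= #|C| <= 6)) || (7 <= #|compE H C|)),
      (forall C p, non2EC_comp H C ->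
          (leaf_block H C p -> 6 <= #|p.2|) /\ (inner_block H C p -> 4 <= #|p.2|)) &
      ~ (exists A R : {set {set T}},
          [/\ (A \subset E :\: H) && (R \subset H), #|A| = #|R|, #|A| <= 3,
              two_edge_cover E ((H :\: R) :|: A) &
              #|comps ((H :\: R) :|: A)| < #|comps H| ])].

Definition bridgesH H : {set {set T}} :=
  \bigcup_(C in comps H | ~~ twoECb C (compE H C)) bridges_of H C.

Definition triangle_edges H : {set {set T}} :=
  \bigcup_(C in comps H | twoECb C (compE H C) && is_cycleb C (compE H C) && (#|C| == 3))
     compE H C.

Local Open Scope ring_scope.

Definition credit2EC H C : rat :=
  let k := #|C| in
  if (7 <= #|compE H C|)%N then 2
  else if is_cycleb C (compE H C) && (k == 3)%N then 1
  else if is_cycleb C (compE H C) && (4 <= k <= 6)%N then (3%:R / 10%:R) * k%:R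
  else 0.

Definition cr H : rat :=
  (\sum_(C in comps H | twoECb C (compE H C)) credit2EC H C)
  + (#|[set C in comps H | ~~ twoECb C (compE H C)]|)%:R
  + (#|bridgesH H|)%:R / 4%:R
  + (\sum_(C in comps H | ~~ twoECb C (compE H C)) (#|blocks_of H C|)%:R).

Definition cost H : rat := (#|H|)%:R + cr H.

End Defs.

(* Main.v *)
Require Import Defs.
From HB Require Import structures.
From mathcomp Require Import all_boot all_order all_algebra.
From mathcomp Require Import zify ring lra.
Import Order.TTheory GRing.Theory Num.Theory.
Set Implicit Arguments. Unset Strict Implicit. Unset Printing Implicit Defensive.

Section P1.

Section X.
Local Open Scope nat_scope.

Lemma set2C (T : finType) (a b : T) : [set a; b] = [set b; a].
Proof. by apply/setP=> x; rewrite !inE orbC. Qed.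

Lemma adj_sym (T : finType) (F : {set {set T}}) : symmetric (adj F).
Proof. by move=> u v; rewrite /adj set2C. Qed.

Lemma conn_sym (T : finType) (F : {set {set T}}) x y : conn F x y = conn F y x.
Proof. exact: (sym_connect_sym (adj_sym F)). Qed.

Lemma conn_trans (T : finType) (F : {set {set T}}) x y z :
  conn F x y -> conn F y z -> conn F x z.
Proof. exact: connect_trans. Qed.

Lemma conn0 (T : finType) (F : {set {set T}}) x : conn F x x.
Proof. exact: connect0. Qed.

Lemma conn1 (T : finType) (F : {set {set T}}) x y : adj F x y -> conn F x y.
Proof. exact: connect1. Qed.

Lemma conn_mono (T : finType) (F1 F2 : {set {set T}}) x y :
  F1 \subset F2 -> conn F1 x y -> conn F2 x y.
Proof.
move=> sF; apply: connect_sub => u v a; apply: connect1.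
by rewrite /adj (subsetP sF).
Qed.

Lemma conn_closed (T : finType) (F : {set {set T}}) (S : {set T}) x y :
  (forall u v, u \in S -> adj F u v -> v \in S) ->
  conn F x y -> x \in S -> y \in S.
Proof.
move=> hS /connectP[p pth ->]; elim: p x pth => //= v p IH x /andP[a pth] xS.
exact: IH pth (hS _ _ xS a).
Qed.

Lemma conn_restr (T : finType) (F : {set {set T}}) (S : {set T}) x y :
  (forall u v, u \in S -> adj F u v -> v \in S) ->
  conn F x y -> x \in S -> conn [set e in F | e \subset S] x y.
Proof.
move=> hS /connectP[p pth ->]; elim: p x pth => /= [|v p IH] x.
  by move=> _ _; apply: conn0.
move=> /andP[a pth] xS; have vS := hS _ _ xS a.
apply: conn_trans (IH _ pth vS); apply: conn1.
by move: a; rewrite /adj inE => ->; rewrite /= subUset !sub1set xS vS.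
Qed.

Lemma conn_replace (T : finType) (F : {set {set T}}) a b x y :
  conn (F :\ [set a; b]) a b -> conn F x y -> conn (F :\ [set a; b]) x y.
Proof.
move=> hab hxy.
pose S := [set w | conn (F :\ [set a; b]) x w].
suff: y \in S by rewrite inE.
apply: conn_closed hxy _; last by rewrite inE conn0.
move=> u v; rewrite !inE => xu auv; apply: conn_trans xu _.
case: (eqVneq [set u; v] [set a; b]) => e; last first.
  by apply: conn1; rewrite /adj !inE e.
have: u \in [set a; b] by rewrite -e !inE eqxx.
have: v \in [set a; b] by rewrite -e !inE eqxx orbT.
move=> /set2P[]-> /set2P[]->; rewrite ?conn0 //.
by rewrite conn_sym.
Qed.

Lemma connP (T : finType) (S : {set T}) (F : {set {set T}}) :
  reflect (forall x y, x \in S -> y \in S -> conn F x y) (connectedb S F).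
Proof.
apply: (iffP idP).
  by move=> /forall_inP h x y xS yS; move: (h x xS) => /forall_inP; apply.
by move=> h; apply/forall_inP=> x xS; apply/forall_inP=> y yS; apply: h.
Qed.

Lemma connectedb_replace (T : finType) (S : {set T}) (F : {set {set T}}) a b :
  connectedb S F -> conn (F :\ [set a; b]) a b -> connectedb S (F :\ [set a; b]).
Proof.
move=> /connP h hab; apply/connP=> x y xS yS; exact: conn_replace hab (h _ _ xS yS).
Qed.

Lemma connectedb_mono (T : finType) (S : {set T}) (F1 F2 : {set {set T}}) :
  F1 \subset F2 -> connectedb S F1 -> connectedb S F2.
Proof. by move=> s /connP h; apply/connP=> x y xS yS; apply: conn_mono s (h _ _ xS yS). Qed.

Lemma twoEC_rm (T : finType) (S : {set T}) (F : {set {set T}}) h :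
  twoECb S F -> connectedb S (F :\ h).
Proof.
move=> /andP[c /forall_inP r]; case hF: (h \in F); first exact: r.
apply: connectedb_mono c; apply/subsetP=> e eF; rewrite !inE eF andbT.
by apply: contraFN hF => /eqP <-.
Qed.

Lemma connectedb_union (T : finType) (S1 S2 : {set T}) (F1 F2 F : {set {set T}}) x :
  connectedb S1 F1 -> connectedb S2 F2 -> x \in S1 -> x \in S2 ->
  F1 \subset F -> F2 \subset F -> connectedb (S1 :|: S2) F.
Proof.
move=> /connP c1 /connP c2 x1 x2 s1 s2.
have hx : forall u, u \in S1 :|: S2 -> conn F x u.
  move=> u; rewrite inE => /orP[] uS.
    exact: conn_mono s1 (c1 _ _ x1 uS).
  exact: conn_mono s2 (c2 _ _ x2 uS).
apply/connP=> u v uS vS; apply: conn_trans (hx _ vS).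
by rewrite conn_sym; apply: hx.
Qed.

Lemma twoEC_union (T : finType) (S1 S2 : {set T}) (F1 F2 : {set {set T}}) x :
  twoECb S1 F1 -> twoECb S2 F2 -> x \in S1 -> x \in S2 ->
  twoECb (S1 :|: S2) (F1 :|: F2).
Proof.
move=> t1 t2 x1 x2; apply/andP; split.
  by apply: connectedb_union (proj1 (andP t1)) (proj1 (andP t2)) x1 x2 _ _;
    rewrite ?subsetUl ?subsetUr.
apply/forall_inP=> h _.
apply: connectedb_union (twoEC_rm h t1) (twoEC_rm h t2) x1 x2 _ _.
  by apply: setSD; rewrite subsetUl.
by apply: setSD; rewrite subsetUr.
Qed.

End X.

End P1.

Section P2.
Local Open Scope nat_scope.

Lemma comp_conn (T : finType) (H : {set {set T}}) C u v :
  C \in comps H -> u \in C -> v \in C -> conn H u v.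
Proof.
move=> /imsetP[x _ ->]; rewrite !inE => xu xv.
by apply: conn_trans xv; rewrite conn_sym.
Qed.

Lemma comp_closed (T : finType) (H : {set {set T}}) C u v :
  C \in comps H -> u \in C -> adj H u v -> v \in C.
Proof.
move=> /imsetP[x _ ->]; rewrite !inE => xu a.
by apply: conn_trans xu (conn1 a).
Qed.

Lemma compE_adj (T : finType) (H : {set {set T}}) C u v :
  C \in comps H -> u \in C -> adj H u v -> [set u; v] \in compE H C.
Proof.
move=> hC uC a; have vC := comp_closed hC uC a.
by move: a; rewrite /adj inE => ->; rewrite subUset !sub1set uC vC.
Qed.

Lemma comp_connected (T : finType) (H : {set {set T}}) C :
  C \in comps H -> connectedb C (compE H C).
Proof.
move=> hC; apply/connP=> u v uC vC.
have := conn_restr (S := C) (fun a b aC ab => comp_closed hC aC ab) (comp_conn hC uC vC) uC.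
by [].
Qed.

Lemma comps_eq (T : finType) (H : {set {set T}}) C D x :
  C \in comps H -> D \in comps H -> x \in C -> x \in D -> C = D.
Proof.
move=> /imsetP[c _ ->] /imsetP[d _ ->]; rewrite !inE => cx dx.
apply/setP=> y; rewrite !inE; apply/idP/idP => h.
  by apply: conn_trans dx _; apply: conn_trans h; rewrite conn_sym.
by apply: conn_trans cx _; apply: conn_trans h; rewrite conn_sym.
Qed.

Lemma edge_split (T : finType) (e : {set T}) z :
  #|e| = 2 -> z \in e -> exists w, z != w /\ e = [set z; w].
Proof.
move=> /eqP/cards2P[a [b [ab ->]]] /set2P[]->; first by exists b.
by exists a; rewrite eq_sym set2C.
Qed.

Lemma edge_sub (T : finType) (e S : {set T}) a b :
  e = [set a; b] -> a \in S -> b \in S -> e \subset S.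
Proof. by move=> ->; rewrite subUset !sub1set => -> ->. Qed.

End P2.

Section P3.
Local Open Scope nat_scope.

Section Key.
Variable T : finType.
Variable H : {set {set T}}.
Variable C : {set T}.
Hypothesis hE2 : forall e, e \in H -> #|e| = 2.
Hypothesis hdeg : forall v, 2 <= deg H v.
Hypothesis hC : C \in comps H.

Local Notation G := (compE H C).

Definition side (f : {set T}) z := [set u | conn (G :\ f) z u].

Lemma G_H e : e \in G -> e \in H.
Proof. by rewrite inE => /andP[]. Qed.

Lemma G_C e : e \in G -> e \subset C.
Proof. by rewrite inE => /andP[]. Qed.

Lemma G2 e : e \in G -> #|e| = 2.
Proof. by move/G_H/hE2. Qed.

Lemma brP f : (f \in bridges_of H C) = (f \in G) && ~~ connectedb C (G :\ f).
Proof. by rewrite inE. Qed.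

Lemma bridge_disc z w : [set z; w] \in bridges_of H C -> ~~ conn (G :\ [set z; w]) z w.
Proof.
rewrite brP => /andP[_ nc]; apply/negP => c; move/negP: nc; apply.
exact: connectedb_replace (comp_connected hC) c.
Qed.

Lemma block_edge_nonbridge p e : is_block H C p -> e \in p.2 -> e \notin bridges_of H C.
Proof.
case/and4P=> /and3P[s1 s2 /forall_inP s3] tw _ _ ep.
have eG : e \in G := subsetP s2 _ ep.
have [a [b [ab eab]]] := cards2P _ (introT eqP (G2 eG)).
have aP : a \in p.1 by apply: (subsetP (s3 _ ep)); rewrite eab !inE eqxx.
have bP : b \in p.1 by apply: (subsetP (s3 _ ep)); rewrite eab !inE eqxx orbT.
have c := twoEC_rm e tw; move/connP: c => c.
have cab : conn (G :\ e) a b := conn_mono (setSD _ s2) (c _ _ aP bP).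
rewrite brP eG /= negbK; subst e.
exact: connectedb_replace (comp_connected hC) cab.
Qed.

Lemma block_edge_uniq p q e :
  is_block H C p -> is_block H C q -> e \in p.2 -> e \in q.2 -> p = q.
Proof.
move=> bp bq ep eq.
pose r := (p.1 :|: q.1, p.2 :|: q.2).
move: (bp) (bq) => /and4P[/and3P[p1 p2 /forall_inP p3] tp _ /forall_inP mp].
move=> /and4P[/and3P[q1 q2 /forall_inP q3] tq _ /forall_inP mq].
have eG : e \in G := subsetP p2 _ ep.
have [a [b [ab eab]]] := cards2P _ (introT eqP (G2 eG)).
have aP : a \in p.1 by apply: (subsetP (p3 _ ep)); rewrite eab !inE eqxx.
have aQ : a \in q.1 by apply: (subsetP (q3 _ eq)); rewrite eab !inE eqxx.
have sr : subgraph_of H C r.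
  apply/and3P; split => /=; rewrite ?subUset ?p1 ?q1 ?p2 ?q2 //.
  apply/forall_inP => e'; rewrite inE => /orP[] h.
    by apply: subset_trans (p3 _ h) (subsetUl _ _).
  by apply: subset_trans (q3 _ h) (subsetUr _ _).
have tr : twoECb r.1 r.2 := twoEC_union tp tq aP aQ.
have /eqP rp : r == p by apply: mp; rewrite sr tr /= !subsetUl.
have /eqP rq : r == q by apply: mq; rewrite sr tr /= !subsetUr.
by rewrite -rp -rq.
Qed.

Lemma max_ext p0 : subgraph_of H C p0 -> twoECb p0.1 p0.2 -> 2 <= #|p0.1| ->
  exists q, [/\ is_block H C q, p0.1 \subset q.1 & p0.2 \subset q.2].
Proof.
move=> s0 t0 c0.
pose P q := [&& subgraph_of H C q, twoECb q.1 q.2, p0.1 \subset q.1 & p0.2 \subset q.2].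
have P0 : P p0 by rewrite /P s0 t0 !subxx.
case: (arg_maxnP (fun q : {set T} * {set {set T}} => #|q.1| + #|q.2|) P0) => q /and4P[sq tq q1 q2] qmax.
exists q; split => //.
apply/and4P; split => //; first exact: leq_trans c0 (subset_leq_card q1).
apply/forallP => q' ; apply/implyP => /and4P[sq' tq' s1 s2].
have Pq' : P q' by rewrite /P sq' tq' (subset_trans q1 s1) (subset_trans q2 s2).
have := qmax _ Pq'.
have := subset_leqif_cards s1; have := subset_leqif_cards s2.
case=> l2 e2 [l1 e1] hle.
have E1 : q.1 == q'.1.
  rewrite -e1 eqn_leq l1 /= -(leq_add2r #|q'.2|); apply: leq_trans hle _; by rewrite leq_add2l l2.
have E2 : q.2 == q'.2.
  rewrite -e2 eqn_leq l2 /= -(leq_add2l #|q'.1|); apply: leq_trans hle _; by rewrite leq_add2r l1.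
by move: E1 E2; case: q {sq tq q1 q2 qmax P0 s1 s2 Pq' l1 l2 e1 e2 hle} => a b;
  case: q' {sq' tq'} => a' b' /= /eqP-> /eqP->.
Qed.

End Key.

End P3.

Section P4.
Local Open Scope nat_scope.

Section Key2.
Variable T : finType.
Variable H : {set {set T}}.
Variable C : {set T}.
Hypothesis hE2 : forall e, e \in H -> #|e| = 2.
Hypothesis hdeg : forall v, 2 <= deg H v.
Hypothesis hC : C \in comps H.

Local Notation G := (compE H C).
Local Notation side := (side H C).

Lemma side_shrink z w a b :
  [set z; w] \in bridges_of H C ->
  a \in side [set z; w] z -> b \in side [set z; w] z ->
  z \notin side [set b; a] b -> a \notin side [set b; a] b ->
  side [set b; a] b \proper side [set z; w] z.
Proof.
move=> fbr aZ bZ zn an.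
have wZ : w \notin side [set z; w] z by rewrite inE; apply: bridge_disc.
apply/properP; split; last by exists a.
apply/subsetP => v vB.
pose S := side [set z; w] z :&: side [set b; a] b.
suff : v \in S by rewrite inE => /andP[].
move: vB; rewrite inE => vB.
apply: conn_closed vB _; last by rewrite inE bZ inE conn0.
move=> u x; rewrite inE => /andP[uZ uB] ux.
have xB : x \in side [set b; a] b by move: uB; rewrite !inE => uB; apply: conn_trans uB (conn1 ux).
rewrite inE xB andbT.
have uxG : [set u; x] \in G by move: ux; rewrite /adj inE => /andP[].
case: (eqVneq [set u; x] [set z; w]) => e.
  have : u \in [set z; w] by rewrite -e !inE eqxx.
  by case/set2P => ?; subst u; [rewrite uB in zn | rewrite uZ in wZ].
move: uZ; rewrite !inE => uZ; apply: conn_trans uZ (conn1 _).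
by rewrite /adj in_setD1 e uxG.
Qed.


Lemma side_closed f z u v : u \in side f z -> adj (G :\ f) u v -> v \in side f z.
Proof. by rewrite !inE => h a; apply: conn_trans h (conn1 a). Qed.

Lemma case2 z w :
  [set z; w] \in bridges_of H C -> z != w ->
  (forall g, g \in bridges_of H C -> ~~ (g \subset side [set z; w] z)) ->
  exists p, leaf_block H C p /\ p.1 \subset side [set z; w] z.
Proof.
move=> fbr zw nob.
set f := [set z; w] in fbr nob *.
set Z := side f z.
have fG : f \in G by move: fbr; rewrite brP => /andP[].
have zZ : z \in Z by rewrite inE conn0.
have wZ : w \notin Z by rewrite inE; apply: bridge_disc.
have zC : z \in C by apply: (subsetP (G_C fG)); rewrite !inE eqxx.
have ZC : Z \subset C.
  apply/subsetP => u; rewrite inE => zu.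
  apply: (conn_closed _ zu zC) => a b aC ab.
  have : [set a; b] \in G by move: ab; rewrite /adj in_setD1 => /andP[].
  by move/G_C/subsetP; apply; rewrite !inE eqxx orbT.
pose P2 := [set e in G | e \subset Z].
have cZ : 2 <= #|Z|.
  have : ~~ ([set e in H | z \in e] \subset [set f]).
    apply/negP => s; have := subset_leq_card s; rewrite cards1.
    by have := hdeg z; rewrite /deg => h1 h2; have := leq_trans h1 h2.
  case/subsetPn => e; rewrite !inE => /andP[eH ze] ef.
  have [w' [zw' ew']] := edge_split (hE2 eH) ze.
  have a : adj H z w' by rewrite /adj -ew'.
  have eG := compE_adj hC zC a.
  have w'Z : w' \in Z.
    apply: side_closed zZ _; by rewrite /adj in_setD1 eG andbT -ew'.
  by apply/card_gt1P; exists z, w'.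
have sub0 : subgraph_of H C (Z, P2).
  apply/and3P; split => //=.
    by apply/subsetP => e; rewrite inE => /andP[].
  by apply/forall_inP => e; rewrite inE => /andP[].
have cP2 : forall u v, u \in Z -> v \in Z -> conn P2 u v.
  move=> u v uZ vZ.
  have cuv : conn (G :\ f) u v.
    by move: uZ vZ; rewrite !inE => uZ vZ; apply: conn_trans vZ; rewrite conn_sym.
  have := conn_restr (S := Z) (fun a b aZ ab => side_closed aZ ab) cuv uZ.
  apply: conn_mono; apply/subsetP => e; rewrite !inE => /andP[/andP[_ ->] ->].
  by [].
have P2Z : forall u v, u \in Z -> adj P2 u v -> v \in Z.
  move=> u v _; rewrite /adj inE => /andP[_ s]; apply: (subsetP s).
  by rewrite !inE eqxx orbT.
have t0 : twoECb Z P2.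
  apply/andP; split; first by apply/connP.
  apply/forall_inP => h; rewrite inE => /andP[hG hZ].
  have [a [b [ab eab]]] := cards2P _ (introT eqP (G2 hE2 hG)).
  have aZ : a \in Z by apply: (subsetP hZ); rewrite eab !inE eqxx.
  have bZ : b \in Z by apply: (subsetP hZ); rewrite eab !inE eqxx orbT.
  have hnb : h \notin bridges_of H C by apply/negP => hb; move: (nob h hb); rewrite hZ.
  have cG : connectedb C (G :\ h) by move: hnb; rewrite brP hG /= negbK.
  have cab : conn (G :\ h) a b.
    by move/connP: cG; apply; apply: (subsetP ZC).
  have cut : forall c d, c \in Z -> ~~ conn (P2 :\ h) c z -> conn (G :\ h) c d ->
      conn (P2 :\ h) c d.
    move=> c d cZ0 nz cd.
    pose S := [set u | conn (P2 :\ h) c u].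
    suff : d \in S by rewrite inE.
    apply: conn_closed cd _; last by rewrite inE conn0.
    move=> u v; rewrite inE => cu uv; rewrite inE; have cu0 := cu; apply: conn_trans cu (conn1 _).
    have uZ : u \in Z.
      apply: (conn_closed _ cu0 cZ0) => x y xZ xy; apply: P2Z xZ _.
      by move: xy; rewrite /adj in_setD1 => /andP[].
    move: uv; rewrite /adj in_setD1 => /andP[uvh uvG].
    case: (eqVneq [set u; v] f) => e.
      have : u \in f by rewrite -e !inE eqxx.
      case/set2P => ?; subst u; last by rewrite uZ in wZ.
      by rewrite cu0 in nz.
    have vZ : v \in Z by apply: side_closed uZ _; rewrite /adj in_setD1 e.
    by rewrite in_setD1 uvh inE uvG /= subUset !sub1set uZ vZ.
  have cab2 : conn (P2 :\ h) a b.
    case: (boolP (conn (P2 :\ h) a z)) => az; last exact: cut.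
    case: (boolP (conn (P2 :\ h) b z)) => bz.
      by apply: conn_trans az _; rewrite conn_sym.
    by rewrite conn_sym; apply: cut => //; rewrite conn_sym.
  rewrite eab; apply: connectedb_replace; first by apply/connP.
  by rewrite -eab.
have [q [bq q1 q2]] := max_ext sub0 t0 cZ.
move: (bq) => /and4P[/and3P[sq1 sq2 sq3] tq _ _].
have zq : z \in q.1 := subsetP q1 _ zZ.
have qZ : q.1 \subset Z.
  apply/subsetP => v vq.
  have c := twoEC_rm f tq; move/connP: c => c.
  rewrite inE; exact: conn_mono (setSD _ sq2) (c _ _ zq vq).
exists q; split => //.
apply/andP; split => //; rewrite /nb_incident_bridges.
suff -> : [set e in bridges_of H C | [exists v in e, v \in q.1]] = [set f].
  by rewrite cards1.
apply/setP => g; rewrite in_set1; apply/idP/idP.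
  case/setIdP => gbr /exists_inP[v vg vq].
  apply/negPn/negP => gf.
  have gG : g \in G by move: gbr; rewrite brP => /andP[].
  have [v' [vv' ev']] := edge_split (G2 hE2 gG) vg.
  have vZ := subsetP qZ _ vq.
  have v'Z : v' \in Z by apply: side_closed vZ _; rewrite /adj in_setD1 -ev' gf gG.
  by move: (nob g gbr); rewrite ev' subUset !sub1set vZ v'Z.
move/eqP => ->; apply/setIdP; split => //; apply/exists_inP; exists z => //.
by rewrite !inE eqxx.
Qed.

Lemma leaf_in_side n : forall z w,
  [set z; w] \in bridges_of H C -> z != w -> #|side [set z; w] z| <= n ->
  exists p, leaf_block H C p /\ p.1 \subset side [set z; w] z.
Proof.
elim: n => [|n IH] z w fbr zw cn.
  have : z \in side [set z; w] z by rewrite inE conn0.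
  by move: cn; rewrite leqn0 cards_eq0 => /eqP ->; rewrite inE.
case: (boolP [exists g in bridges_of H C, g \subset side [set z; w] z]); last first.
  move=> nex; apply: case2 => // g gbr; apply/negP => gs.
  by move/negP: nex; apply; apply/exists_inP; exists g.
case/exists_inP => g gbr gZ.
have gG : g \in G by move: gbr; rewrite brP => /andP[].
have [a [b [ab eab]]] := cards2P _ (introT eqP (G2 hE2 gG)).
subst g.
have aZ : a \in side [set z; w] z by apply: (subsetP gZ); rewrite !inE eqxx.
have bZ : b \in side [set z; w] z by apply: (subsetP gZ); rewrite !inE eqxx orbT.
have dis := bridge_disc hC gbr.
have gbr' : [set b; a] \in bridges_of H C by rewrite set2C.
have dis' := bridge_disc hC gbr'.
case: (boolP (z \in side [set a; b] b)) => zb.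
  have za : z \notin side [set a; b] a.
    apply/negP; rewrite !inE => za; move: zb; rewrite inE => zb.
    by move/negP: dis; apply; apply: conn_trans za _; rewrite conn_sym.
  have bn : b \notin side [set a; b] a by rewrite inE.
  have pr := side_shrink (a := b) (b := a) fbr bZ aZ za bn.
  have [p [lp sp]] := IH a b gbr ab (leq_trans (proper_card pr) cn).
  by exists p; split => //; apply: subset_trans sp (proper_sub pr).
have an : a \notin side [set b; a] b by rewrite inE.
rewrite set2C in zb.
have pr := side_shrink fbr aZ bZ zb an.
have ba : b != a by rewrite eq_sym.
have [p [lp sp]] := IH b a gbr' ba (leq_trans (proper_card pr) cn).
by exists p; split => //; apply: subset_trans sp (proper_sub pr).
Qed.

Lemma two_leaves : ~~ twoECb C G ->
  exists p q, [/\ leaf_block H C p, leaf_block H C q & p != q].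
Proof.
move=> n2; have cG := comp_connected hC.
move: n2; rewrite /twoECb cG /= => /forall_inPn[f fG nc].
have fbr : f \in bridges_of H C by rewrite brP fG nc.
have [z [w [zw ef]]] := cards2P _ (introT eqP (G2 hE2 fG)).
subst f.
have fbr' : [set w; z] \in bridges_of H C by rewrite set2C.
have [p [lp sp]] := leaf_in_side fbr zw (leqnn _).
have wz : w != z by rewrite eq_sym.
have [q [lq sq]] := leaf_in_side fbr' wz (leqnn _).
exists p, q; split => //; apply/negP => /eqP e; subst q.
move: lp => /andP[/and4P[_ _ c _] _].
have [u up] : exists u, u \in p.1.
  by apply/set0Pn; rewrite -card_gt0; apply: leq_trans c.
have := subsetP sp _ up; have := subsetP sq _ up; rewrite !inE set2C => wu zu.
by move/negP: (bridge_disc hC fbr); apply; apply: conn_trans zu _; rewrite conn_sym.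
Qed.

End Key2.

End P4.

Section P5.
Local Open Scope nat_scope.

Lemma sum_ind (U : finType) (A : {set U}) (B : pred U) :
  \sum_(x in A) (x \in B) = #|[set x in A | x \in B]|.
Proof.
rewrite -sum1dep_card big_mkcondr /=; apply: eq_bigr => x _.
by case: (x \in B).
Qed.

Lemma card_ind (U : finType) (A B : {set U}) :
  B \subset A -> #|B| = \sum_(x in A) (x \in B).
Proof.
move=> s; rewrite sum_ind; apply: eq_card => x; rewrite !inE.
by case xB: (x \in B); rewrite ?andbT ?andbF ?(subsetP s).
Qed.

Lemma sum_card_le (I U : finType) (P : pred I) (F : I -> {set U}) (A : {set U}) :
  (forall i, P i -> F i \subset A) ->
  (forall i j x, P i -> P j -> x \in F i -> x \in F j -> i = j) ->
  \sum_(i | P i) #|F i| <= #|A|.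
Proof.
move=> sA uq.
rewrite (eq_bigr (fun i => \sum_(x in A) (x \in F i))); last first.
  by move=> i Pi; apply: card_ind; apply: sA.
rewrite exchange_big /= -sum1_card; apply: leq_sum => x xA.
case: (pickP (fun i => P i && (x \in F i))) => [i0 /andP[P0 x0]|none].
  rewrite (bigD1 i0) //= x0 big1 // => j /andP[Pj ji].
  case xj: (x \in F j) => //; by rewrite (uq _ _ _ Pj P0 xj x0) eqxx in ji.
rewrite big1 // => j Pj; have := none j; rewrite Pj /=.
by case: (x \in F j).
Qed.

Lemma handshake (U : finType) (F : {set {set U}}) (S : {set U}) :
  (forall e, e \in F -> e \subset S /\ #|e| = 2) ->
  (forall v, v \in S -> deg F v = 2) -> #|F| = #|S|.
Proof.
move=> hF hS.
have e1 : 2 * #|F| = \sum_(e in F) #|e|.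
  by rewrite -sum1_card big_distrr /=; apply: eq_bigr => e /hF[_ ->].
have e2 : \sum_(e in F) #|e| = \sum_(v in S) deg F v.
  rewrite (eq_bigr (fun e : {set U} => \sum_(v in S) (v \in e))); last first.
    by move=> e /hF[s _]; apply: card_ind.
  rewrite exchange_big /=; apply: eq_bigr => v _.
  rewrite /deg sum_ind; apply: eq_card => e; rewrite !inE.
  by [].
have e3 : \sum_(v in S) deg F v = 2 * #|S|.
  by rewrite -sum1_card big_distrr /=; apply: eq_bigr => v /hS ->.
by apply/eqP; rewrite -(eqn_pmul2l (isT : 0 < 2)) e1 e2 e3.
Qed.

End P5.

Section P6.
Local Open Scope nat_scope.

Lemma non2EC_ineq (T : finType) (H : {set {set T}}) (C : {set T}) :
  (forall e, e \in H -> #|e| = 2) -> (forall v, 2 <= deg H v) -> C \in comps H ->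
  ~~ twoECb C (compE H C) ->
  (forall p, (leaf_block H C p -> 6 <= #|p.2|) /\ (inner_block H C p -> 4 <= #|p.2|)) ->
  10 * (1 + #|blocks_of H C|) + 3 * #|bridges_of H C| <= 3 * #|compE H C|.
Proof.
move=> hE2 hdeg hC n2 hsz.
set G := compE H C.
have brG : bridges_of H C \subset G by apply/subsetP => e; rewrite brP => /andP[].
have s1 : \sum_(p in blocks_of H C) #|p.2| <= #|G :\: bridges_of H C|.
  apply: sum_card_le.
    move=> p; rewrite inE => bp; apply/subsetP => e ep; rewrite inE.
    rewrite (block_edge_nonbridge hE2 hC bp ep) /=.
    by move: bp => /and4P[/and3P[_ s _] _ _ _]; apply: (subsetP s).
  move=> p q e; rewrite !inE => bp bq ep eq2.
  by have := block_edge_uniq hE2 bp bq ep eq2.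
rewrite cardsDS // in s1.
have [p1 [p2 [l1 l2 ne]]] := two_leaves hE2 hdeg hC n2.
have bl1 : p1 \in blocks_of H C by rewrite inE; case/andP: l1.
have bl2 : p2 \in blocks_of H C by rewrite inE; case/andP: l2.
have s2 : \sum_(p in blocks_of H C) (4 + 2 * (p == p1) + 2 * (p == p2))
          <= \sum_(p in blocks_of H C) #|p.2|.
  apply: leq_sum => p; rewrite inE => bp.
  case: (eqVneq p p1) => [->|n1].
    rewrite (negbTE ne) /= addn0; exact: (proj1 (hsz p1) l1).
  case: (eqVneq p p2) => [->|n2'].
    exact: (proj1 (hsz p2) l2).
  rewrite /= !muln0 !addn0.
  case: (boolP (nb_incident_bridges H C p == 1)) => nb.
    have := proj1 (hsz p); rewrite /leaf_block bp nb => h.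
    by apply: leq_trans (h isT).
  by apply: (proj2 (hsz p)); rewrite /inner_block bp nb.
have ind : forall q, q \in blocks_of H C -> \sum_(p in blocks_of H C) (p == q) = 1.
  move=> q bq; rewrite (bigD1 q) //= eqxx big1 // => p /andP[_ /negbTE ->].
  by [].
rewrite !big_split /= sum_nat_const !ind // !big1_eq in s2.
have cb : #|bridges_of H C| <= #|G| by apply: subset_leq_card.
move: s1 s2 cb.
move: (\sum_(p in blocks_of H C) #|p.2|) (#|blocks_of H C|) (#|bridges_of H C|) (#|G|).
move=> s n b g; lia.
Qed.

Local Open Scope ring_scope.

Lemma twoEC_ineq (T : finType) (H : {set {set T}}) (C : {set T}) :
  (forall e, e \in H -> #|e| = 2) -> C \in comps H ->
  twoECb C (compE H C) ->
  credit2EC H C <= 3%:R / 10%:R * (#|compE H C|)%:R +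
     (if twoECb C (compE H C) && is_cycleb C (compE H C) && (#|C| == 3)%N
      then (#|compE H C|)%:R / 30%:R else 0).
Proof.
move=> hE2 hC t.
have hs : is_cycleb C (compE H C) -> #|compE H C| = #|C|.
  move=> /andP[_ /forall_inP d]; apply: handshake.
    by move=> e eG; split; [exact: G_C eG | by have := G2 hE2 eG].
  by move=> v vC; apply/eqP; apply: d.
rewrite /credit2EC t /=.
have g0 : 0 <= (#|compE H C|)%:R :> rat by apply: ler0n.
have c0 : 0 <= (#|C|)%:R :> rat by apply: ler0n.
case: ifP => h7.
  have : (7 <= #|compE H C|)%N := h7.
  move: (#|compE H C|) => g; rewrite -(ler_nat rat) => h.
  case: ifP => _; lra.
case: (boolP (is_cycleb C (compE H C))) => cy /=; last first.
  by try (case: ifP => _); lra.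
rewrite (hs cy).
case: ifP => e3.
  by rewrite (eqP e3); lra.
case: ifP => _; lra.
Qed.

End P6.


Lemma card_bigcup_le (I U : finType) (P : pred I) (F : I -> {set U}) :
  (#|\bigcup_(i | P i) F i| <= \sum_(i | P i) #|F i|)%N.
Proof.
elim/big_rec2: _ => [|i n S _ le]; first by rewrite cards0.
by rewrite (leq_trans (leq_card_setU (F i) S).1) ?leq_add2l.
Qed.

Lemma compE_uniq (T : finType) (H : {set {set T}}) C D e :
  (forall e, e \in H -> #|e| = 2) -> C \in comps H -> D \in comps H ->
  e \in compE H C -> e \in compE H D -> C = D.
Proof.
move=> hE2 hC hD; rewrite !inE => /andP[eH eC] /andP[_ eD].
have [a [b [ab eab]]] := cards2P _ (introT eqP (hE2 _ eH)).
have ae : a \in e by rewrite eab !inE eqxx.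
exact: comps_eq hC hD (subsetP eC _ ae) (subsetP eD _ ae).
Qed.

Local Open Scope ring_scope.

Theorem lemma6 (T : finType) (E H : {set {set T}}) (b t : rat) :
  simple_edges E ->
  two_edge_cover E H ->
  canonical E H ->
  (#|bridgesH H|)%:R = b * (#|H|)%:R ->
  (#|triangle_edges H|)%:R = t * (#|H|)%:R ->
  cost H <= (13%:R / 10%:R + t / 30%:R - b / 20%:R) * (#|H|)%:R.
Proof.
move=> hs /andP[sHE /forallP hdeg] [hi hii _] hb ht.
have hE2 : forall e, e \in H -> #|e| = 2%N.
  by move=> e eH; move/forall_inP: hs => /(_ e (subsetP sHE _ eH)) /eqP.
set K := comps H.
pose tri C := twoECb C (compE H C) && is_cycleb C (compE H C) && (#|C| == 3)%N.
have F1 : (\sum_(C in K) #|compE H C| <= #|H|)%N.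
  apply: sum_card_le => [C _|C D e hC hD eC eD].
    by apply/subsetP => e; rewrite inE => /andP[].
  exact: compE_uniq hE2 hC hD eC eD.
have F2 : (\sum_(C in K | tri C) #|compE H C| <= #|triangle_edges H|)%N.
  apply: sum_card_le => [C hC|C D e /andP[hC _] /andP[hD _] eC eD].
    by apply: (bigcup_sup C).
  exact: compE_uniq hE2 hC hD eC eD.
have F3 := card_bigcup_le (fun C => (C \in K) && ~~ twoECb C (compE H C)) (bridges_of H).
pose f := fun C : {set T} => if twoECb C (compE H C) then credit2EC H C
   else 1 + (#|blocks_of H C|)%:R + 3%:R / 10%:R * (#|bridges_of H C|)%:R : rat.
pose g := fun C : {set T} => 3%:R / 10%:R * (#|compE H C|)%:R +
   (if tri C then (#|compE H C|)%:R / 30%:R else 0) : rat.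
have fg : \sum_(C in K) f C <= \sum_(C in K) g C.
  apply: ler_sum => C hC; rewrite /f /g.
  case: ifP => tw; first exact: twoEC_ineq hE2 hC tw.
  have nC : non2EC_comp H C by rewrite /non2EC_comp hC tw.
  have := non2EC_ineq hE2 hdeg hC (negbT tw) (fun p => hii C p nC).
  rewrite -(ler_nat rat) !natrD !natrM /= => h.
  have t0 : tri C = false by rewrite /tri tw.
  rewrite t0; lra.
set A := \sum_(C in K | twoECb C (compE H C)) credit2EC H C.
set Nn := (#|[set C in K | ~~ twoECb C (compE H C)]|)%:R : rat.
set NB := \sum_(C in K | ~~ twoECb C (compE H C)) (#|blocks_of H C|)%:R : rat.
set BR := (\sum_(C in K | ~~ twoECb C (compE H C)) #|bridges_of H C|)%N.
have Sf : \sum_(C in K) f C = A + Nn + NB + 3%:R/10%:R * BR%:R.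
  rewrite (bigID (fun C => twoECb C (compE H C))) /=.
  have e1 : \sum_(C in K | twoECb C (compE H C)) f C = A.
    by apply: eq_bigr => C /andP[_ tw]; rewrite /f tw.
  have e2 : \sum_(C in K | ~~ twoECb C (compE H C)) f C =
     \sum_(C in K | ~~ twoECb C (compE H C)) (1 + (#|blocks_of H C|)%:R + 3%:R / 10%:R * (#|bridges_of H C|)%:R).
    by apply: eq_bigr => C /andP[_ tw]; rewrite /f (negbTE tw).
  rewrite e1 e2.
  rewrite !big_split /= -mulr_sumr /BR natr_sum.
  have -> : \sum_(C in K | ~~ twoECb C (compE H C)) (1:rat) = Nn.
    rewrite /Nn -sum1_card natr_sum; apply: eq_big => [C|C _]; by rewrite ?inE.
  by rewrite -!addrA.
set SG := (\sum_(C in K) #|compE H C|)%N.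
set ST := (\sum_(C in K | tri C) #|compE H C|)%N.
have Sg : \sum_(C in K) g C = 3%:R/10%:R * SG%:R + ST%:R / 30%:R.
  rewrite big_split /= -mulr_sumr -big_mkcondr /= -mulr_suml /SG /ST !natr_sum.
  by [].
rewrite Sf Sg in fg.
have F3' : (#|bridgesH H| <= BR)%N := F3.
move: F1 F2 F3'; rewrite -!(ler_nat rat) => F1' F2' F3''.
have -> : (13%:R / 10%:R + t / 30%:R - b / 20%:R) * (#|H|)%:R =
   13%:R / 10%:R * (#|H|)%:R + (t * (#|H|)%:R) / 30%:R - (b * (#|H|)%:R) / 20%:R :> rat.
  by ring.
rewrite -hb -ht /cost /cr -/K -/A -/Nn -/NB.
rewrite -/SG in F1'; rewrite -/ST in F2'.
lra.
Qed.
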